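(* Let $\tau$ be a signature, $\phi\in SO(\tau)$, $\{\mathcal B_j:j\in J\}$ a family of $\tau$-structures, $\mathcal G$ an ultrafilter on $J$, and $(\mathcal A_\omega,\Upsilon_{\lim})$ the limit-Henkin model formed from $\{\mathcal B_j:j\in J\}$ by an $\omega$-long ultrachain $\langle\mathcal A_n:n\in\omega\rangle$ with $\mathcal A_0=\prod_{j\in J}\mathcal B_j/\mathcal G$. Then $\{j\in J:\mathcal B_j\models\phi\}\in\mathcal G$ if and only if $(\mathcal A_\omega,\Upsilon_{\lim})\models_\lambda\phi$.
   Context: $SO(\tau)$: second-order $\tau$-formulas with relation variables only; $\mathcal B_j\models\phi$ is the standard (full) second-order semantics. Decomposability: if $\mathcal C=\prod_k\mathcal C_k/\mathcal H$, a relation $R\subseteq C^m$ ($m\ge1$) is decomposable if $R=\prod_k R_k/\mathcal H$ for some $R_k\subseteq C_k^m$. For ultrafilters $\mathcal F$ on $I$, $\mathcal G$ on $J$, $X\in\mathcal G\times\mathcal F$ iff $\{i:\{j:(j,i)\in X\}\in\mathcal G\}\in\mathcal F$. An $\omega$-long ultrachain is a sequence $\langle\mathcal A_n:n\in\omega\rangle$ with $\mathcal A_{n+1}={}^{I_n}\mathcal A_n/\mathcal F_n$ for ultrafilters $\mathcal F_n$ on sets $I_n$, each $\mathcal A_n$ identified with its diagonal image so that $\mathcal A_n\subseteq\mathcal A_{n+1}$; its limit is $\mathcal A_\omega=\bigcup_n\mathcal A_n$. With $\mathcal A_0=\prod_j\mathcal B_j/\mathcal G$, $\mathcal A_n$ is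 identified with the ultraproduct of the family $\{\mathcal B_j\}$ (indexed by $J\times I_0\times\dots\times I_{n-1}$) by $\mathcal G\times\mathcal F_0\times\dots\times\mathcal F_{n-1}$; $\Upsilon_n$ is the set of relations on $\mathcal A_n$ decomposable w.r.t. this presentation. $\Upsilon_{\lim}$ is the set of relations $R$ on $\mathcal A_\omega$ for which there are $m$ and $R_m\in\Upsilon_m$ such that, defining $\langle\mathcal A_{k+1},R_{k+1}\rangle={}^{I_k}\langle\mathcal A_k,R_k\rangle/\mathcal F_k$ for $k\ge m$, $R=\bigcup_{k\ge m}R_k$. The pair $(\mathcal A_\omega,\Upsilon_{\lim})$ is the limit-Henkin model. $\models_\lambda$: Henkin semantics in $(\mathcal A_\omega,\Upsilon_{\lim})$, i.e. first-order parts evaluated as usual in the expansion by the assigned relations, second-order quantifiers ranging only over relations in $\Upsilon_{\lim}$ of the appropriate arity, and $\models_\lambda\phi$ meaning truth under all assignments (relation variables assigned values in $\Upsilon_{\lim}$). *)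

(* Defs.v *)
From Stdlib Require Import ClassicalEpsilon PeanoNat.
From mathcomp Require Import ssreflect ssrfun ssrbool eqtype ssrnat fintype.

Set Implicit Arguments.
Unset Strict Implicit.
Unset Printing Implicit Defensive.

(** A signature: relation symbols and function symbols (constants are
    function symbols of arity 0), each with an arity. *)
Record signature := Signature {
  rsym : Type; rar : rsym -> nat;
  fsym : Type; far : fsym -> nat }.

(** A tau-structure (nonempty domain, as usual in model theory). *)
Record structure (tau : signature) := Structure {
  dom : Type;
  dom_pt : dom;
  rel_i : forall P : rsym tau, ('I_(rar P) -> dom) -> Prop;
  fun_i : forall f : fsym tau, ('I_(far f) -> dom) -> dom }.

(** A structure presented by representatives modulo an equality relation
    (used for ultraproducts / ultrachain limits, which are quotients). *)
Record sstr (tau : signature) := SStr {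
  scar : Type;
  sequ : scar -> scar -> Prop;
  srel : forall P : rsym tau, ('I_(rar P) -> scar) -> Prop;
  sfun : forall f : fsym tau, ('I_(far f) -> scar) -> scar }.

Definition sstr_of (tau : signature) (M : structure tau) : sstr tau :=
  @SStr tau (dom M) (@eq (dom M)) (@rel_i tau M) (@fun_i tau M).

Inductive term (tau : signature) : Type :=
| TVar (x : nat)
| TFun (f : fsym tau) (args : 'I_(far f) -> term tau).

(** Relation variables are pairs (X, m): name X, arity m.+1 (>= 1). *)
Inductive formula (tau : signature) : Type :=
| FEq (t1 t2 : term tau)
| FRel (P : rsym tau) (args : 'I_(rar P) -> term tau)
| FVar (X m : nat) (args : 'I_m.+1 -> term tau)
| FNot (p : formula tau)
| FAnd (p q : formula tau)
| FOr (p q : formula tau)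
| FImp (p q : formula tau)
| FEx (x : nat) (p : formula tau)
| FAll (x : nat) (p : formula tau)
| FExR (X m : nat) (p : formula tau)
| FAllR (X m : nat) (p : formula tau).

Section Semantics.
Variable tau : signature.
Variable M : sstr tau.

Definition RelT (m : nat) : Type := ('I_m.+1 -> scar M) -> Prop.

(** D m = the admissible relations of arity m.+1. *)
Variable D : forall m, RelT m -> Prop.

Fixpoint teval (rho : nat -> scar M) (t : term tau) : scar M :=
  match t with
  | TVar x => rho x
  | TFun f args => @sfun tau M f (fun l => teval rho (args l))
  end.

Definition upd1 (rho : nat -> scar M) (x : nat) (a : scar M) : nat -> scar M :=
  fun y => if Nat.eqb y x then a else rho y.

Definition updR (sigma : forall m, nat -> RelT m) (m X : nat) (R : RelT m)
  : forall k, nat -> RelT k :=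
  fun k => match Nat.eq_dec m k with
           | left e => fun Y => if Nat.eqb Y X then eq_rect m RelT R k e
                                else sigma k Y
           | right _ => sigma k
           end.

Fixpoint sat (rho : nat -> scar M) (sigma : forall m, nat -> RelT m)
  (phi : formula tau) : Prop :=
  match phi with
  | FEq t1 t2 => @sequ tau M (teval rho t1) (teval rho t2)
  | FRel P args => @srel tau M P (fun l => teval rho (args l))
  | FVar X m args => sigma m X (fun l => teval rho (args l))
  | FNot p => ~ sat rho sigma p
  | FAnd p q => sat rho sigma p /\ sat rho sigma q
  | FOr p q => sat rho sigma p \/ sat rho sigma q
  | FImp p q => sat rho sigma p -> sat rho sigma q
  | FEx x p => exists a : scar M, sat (upd1 rho x a) sigma p
  | FAll x p => forall a : scar M, sat (upd1 rho x a) sigma p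
  | FExR X m p => exists R : RelT m, D R /\ sat rho (updR sigma X R) p
  | FAllR X m p => forall R : RelT m, D R -> sat rho (updR sigma X R) p
  end.

Definition valid (phi : formula tau) : Prop :=
  forall (rho : nat -> scar M) (sigma : forall m, nat -> RelT m),
    (forall m X, D (sigma m X)) -> sat rho sigma phi.

End Semantics.

Definition full_models (tau : signature) (B : structure tau) (phi : formula tau)
  : Prop :=
  valid (M := sstr_of B) (fun _ _ => True) phi.

Record ultrafilter (X : Type) (U : (X -> Prop) -> Prop) : Prop := {
  uf_full : U (fun _ => True);
  uf_empty : ~ U (fun _ => False);
  uf_up : forall A B : X -> Prop, (forall x, A x -> B x) -> U A -> U B;
  uf_cap : forall A B : X -> Prop, U A -> U B -> U (fun x => A x /\ B x);
  uf_ult : forall A : X -> Prop, U A \/ U (fun x => ~ A x) }.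

Section Ultrachain.
Variable tau : signature.
Variable J : Type.
Variable B : J -> structure tau.
Variable G : (J -> Prop) -> Prop.
Variable I : nat -> Type.
Variable F : forall n, (I n -> Prop) -> Prop.

Fixpoint A (n : nat) : Type :=
  match n with
  | 0 => forall j : J, dom (B j)
  | n'.+1 => I n' -> A n'
  end.

Fixpoint eqA (n : nat) : A n -> A n -> Prop :=
  match n return A n -> A n -> Prop with
  | 0 => fun a b => G (fun j => a j = b j)
  | n'.+1 => fun f g => @F n' (fun i => @eqA n' (f i) (g i))
  end.

Fixpoint relA (n : nat) (P : rsym tau) : ('I_(rar P) -> A n) -> Prop :=
  match n return ('I_(rar P) -> A n) -> Prop with
  | 0 => fun a => G (fun j => @rel_i tau (B j) P (fun l => a l j))
  | n'.+1 => fun a => @F n' (fun i => @relA n' P (fun l => a l i))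
  end.

Fixpoint funA (n : nat) (f : fsym tau) : ('I_(far f) -> A n) -> A n :=
  match n return ('I_(far f) -> A n) -> A n with
  | 0 => fun a => fun j => @fun_i tau (B j) f (fun l => a l j)
  | n'.+1 => fun a => fun i => @funA n' f (fun l => a l i)
  end.

Fixpoint up (d n : nat) : A n -> A (d + n) :=
  match d return A n -> A (d + n) with
  | 0 => fun a => a
  | d'.+1 => fun a => fun _ : I (d' + n) => @up d' n a
  end.

(** The limit A_omega = union of the A_n (as a direct limit). *)
Definition Aom : Type := {n : nat & A n}.

Definition eqom (x y : Aom) : Prop :=
  exists d1 d2 (e : d1 + projT1 x = d2 + projT1 y),
    eqA (eq_rect _ A (@up d1 _ (projT2 x)) _ e) (@up d2 _ (projT2 y)).

Definition relom (P : rsym tau) (x : 'I_(rar P) -> Aom) : Prop :=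
  exists n (y : 'I_(rar P) -> A n),
    (forall l, eqom (x l) (existT A n (y l))) /\ @relA n P y.

Definition rep_inh (k : nat) : inhabited {n : nat & 'I_k -> A n} :=
  inhabits (existT (fun n => 'I_k -> A n) 0 (fun _ j => @dom_pt tau (B j))).

Definition funom (f : fsym tau) (x : 'I_(far f) -> Aom) : Aom :=
  let w := epsilon (rep_inh (far f))
             (fun p => forall l, eqom (x l) (existT A (projT1 p) (projT2 p l))) in
  existT A (projT1 w) (@funA (projT1 w) f (projT2 w)).

Definition Aom_str : sstr tau := @SStr tau Aom eqom relom funom.

(** Index set J x I_0 x ... x I_(n-1) and the product ultrafilter
    G x F_0 x ... x F_(n-1). *)
Fixpoint Idx (n : nat) : Type :=
  match n with
  | 0 => J
  | n'.+1 => (Idx n' * I n')%type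
  end.

Fixpoint jof (n : nat) : Idx n -> J :=
  match n return Idx n -> J with
  | 0 => fun j => j
  | n'.+1 => fun k => @jof n' k.1
  end.

Fixpoint evalA (n : nat) : A n -> forall k : Idx n, dom (B (jof k)) :=
  match n return A n -> forall k : Idx n, dom (B (jof k)) with
  | 0 => fun a k => a k
  | n'.+1 => fun a k => @evalA n' (a k.2) k.1
  end.

Fixpoint inH (n : nat) : (Idx n -> Prop) -> Prop :=
  match n return (Idx n -> Prop) -> Prop with
  | 0 => G
  | n'.+1 => fun X => @F n' (fun i => @inH n' (fun k => X (k, i)))
  end.

(** Upsilon_n: relations (arity m.+1) on A_n decomposable w.r.t. the
    presentation A_n = prod_k B_(j k) / (G x F_0 x ... x F_(n-1)). *)
Definition decomposable (n m : nat) (R : ('I_m.+1 -> A n) -> Prop) : Prop :=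
  exists Rk : forall k : Idx n, ('I_m.+1 -> dom (B (jof k))) -> Prop,
    forall a : 'I_m.+1 -> A n,
      R a <-> inH (fun k => Rk k (fun l => evalA (a l) k)).

(** <A_(k+1), R_(k+1)> = <A_k, R_k>^(I_k) / F_k, iterated d times from level n. *)
Fixpoint relUp (n m : nat) (R : ('I_m.+1 -> A n) -> Prop) (d : nat)
  : ('I_m.+1 -> A (d + n)) -> Prop :=
  match d return ('I_m.+1 -> A (d + n)) -> Prop with
  | 0 => R
  | d'.+1 => fun a => @F (d' + n) (fun i => @relUp n m R d' (fun l => a l i))
  end.

Definition Upsilon_lim (m : nat) (R : ('I_m.+1 -> Aom) -> Prop) : Prop :=
  exists (n : nat) (Rn : ('I_m.+1 -> A n) -> Prop),
    decomposable Rn /\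
    forall x : 'I_m.+1 -> Aom,
      R x <-> exists (d : nat) (y : 'I_m.+1 -> A (d + n)),
                (forall l, eqom (x l) (existT A (d + n) (y l))) /\ @relUp n m Rn d y.

Definition lambda_models (phi : formula tau) : Prop :=
  valid (M := Aom_str) Upsilon_lim phi.

End Ultrachain.

(* Main.v *)
Require Import Defs.
From mathcomp Require Import ssreflect ssrfun ssrbool eqtype ssrnat fintype seq.
From Stdlib Require Import PeanoNat ClassicalEpsilon FunctionalExtensionality PropExtensionality Classical.

Set Implicit Arguments.
Unset Strict Implicit.
Unset Printing Implicit Defensive.

Section UF.
Variable X : Type.
Variable U : (X -> Prop) -> Prop.
Hypothesis HU : ultrafilter U.

Lemma uf_eq (P Q : X -> Prop) : (forall x, P x <-> Q x) -> U P <-> U Q.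
Proof. move=> H; split; apply: (uf_up HU) => x; rewrite H //. Qed.

Lemma uf_const (P : Prop) : U (fun _ => P) <-> P.
Proof.
split.
- move=> H; apply: NNPP => nP; apply: (uf_empty HU).
  by apply: (uf_up HU) H => x.
- move=> p; by apply: (uf_up HU) (uf_full HU).
Qed.

Lemma uf_not (P : X -> Prop) : U (fun x => ~ P x) <-> ~ U P.
Proof.
split.
- move=> H1 H2; apply: (uf_empty HU).
  by apply: (uf_up HU) (uf_cap HU H1 H2) => x [].
- by case: (uf_ult HU P).
Qed.

Lemma uf_and (P Q : X -> Prop) : U (fun x => P x /\ Q x) <-> U P /\ U Q.
Proof.
split.
- move=> H; split; by apply: (uf_up HU) H => x [].
- by case=> ??; apply: uf_cap.
Qed.

Lemma uf_or (P Q : X -> Prop) : U (fun x => P x \/ Q x) <-> U P \/ U Q.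
Proof.
split.
- move=> H; apply: NNPP => nH.
  have h1 : U (fun x => ~ P x) by apply/uf_not => ?; apply: nH; left.
  have h2 : U (fun x => ~ Q x) by apply/uf_not => ?; apply: nH; right.
  apply: (uf_empty HU); apply: (uf_up HU) (uf_cap HU H (uf_cap HU h1 h2)).
  by move=> x [[?|?] [? ?]].
- by case=> H; apply: (uf_up HU) H => x; [left|right].
Qed.

Lemma uf_imp (P Q : X -> Prop) : U (fun x => P x -> Q x) <-> (U P -> U Q).
Proof.
split.
- move=> H1 H2; by apply: (uf_up HU) (uf_cap HU H1 H2) => x [h /h].
- move=> H; case: (uf_ult HU P) => hP.
  + by apply: (uf_up HU) (H hP) => x ??.
  + by apply: (uf_up HU) hP => x ??.
Qed.

Lemma uf_fin (K : finType) (P : K -> X -> Prop) :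
  (forall l, U (P l)) -> U (fun x => forall l, P l x).
Proof.
move=> H.
have : U (fun x => forall l, l \in enum K -> P l x).
  elim: (enum K) => [|a s IH].
    by apply: (uf_up HU) (uf_full HU) => x _ l.
  apply: (uf_up HU) (uf_cap HU (H a) IH) => x [h1 h2] l.
  by rewrite in_cons => /orP [/eqP ->|/h2].
by apply: (uf_up HU) => x h l; apply: h; rewrite mem_enum.
Qed.

End UF.

Section Chain.
Variable tau : signature.
Variable J : Type.
Variable B : J -> structure tau.
Variable G : (J -> Prop) -> Prop.
Variable I : nat -> Type.
Variable F : forall n, (I n -> Prop) -> Prop.
Hypothesis HG : ultrafilter G.
Hypothesis HF : forall n, ultrafilter (@F n).

Local Notation AA := (A B I).
Local Notation IX := (Idx J I).
Local Notation inH := (@inH J G I F).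
Local Notation eqA := (@eqA tau J B G I F).
Local Notation relA := (@relA tau J B G I F).
Local Notation eqom := (@eqom tau J B G I F).

Lemma inH_uf N : ultrafilter (@inH N).
Proof.
elim: N => [|N IH] //=.
split.
- by apply: (uf_up (HF N)) (uf_full (HF N)) => i _; apply: uf_full.
- move=> H; apply: (uf_empty (HF N)); apply: (uf_up (HF N)) H => i.
  exact: (uf_empty IH).
- move=> P Q H; apply: (uf_up (HF N)) => i; apply: (uf_up IH) => k; exact: H.
- move=> P Q H1 H2; apply: (uf_up (HF N)) (uf_cap (HF N) H1 H2) => i [h1 h2].
  exact: (uf_cap IH).
- move=> P; case: (uf_ult (HF N) (fun i => inH (fun k => P (k, i)))) => H; [left|right] => //.
  apply: (uf_up (HF N)) H => i h.
  case: (uf_ult IH (fun k => P (k, i))) => // h'.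
Qed.

Fixpoint sect (N : nat) : (forall kk : IX N, dom (B (jof kk))) -> AA N :=
  match N return (forall kk : IX N, dom (B (jof kk))) -> AA N with
  | 0 => fun g => g
  | N'.+1 => fun g => fun i => @sect N' (fun kk => g (kk, i))
  end.

Lemma evalA_sect N g kk : evalA (@sect N g) kk = g kk.
Proof.
elim: N g kk => [|N IH] g //= [kk i] /=; by rewrite IH.
Qed.

Lemma sect_evalA N (a : AA N) : sect (evalA a) = a.
Proof.
elim: N a => [|N IH] a //=; apply: functional_extensionality => i.
exact: IH.
Qed.

Lemma eqA_inH N (a b : AA N) : eqA a b <-> inH (fun kk => evalA a kk = evalA b kk).
Proof.
elim: N a b => [|N IH] a b //=.
apply: uf_eq => // i; exact: IH.
Qed.

Lemma relA_inH N P (a : 'I_(rar P) -> AA N) :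
  relA a <-> inH (fun kk => @rel_i tau (B (jof kk)) P (fun l => evalA (a l) kk)).
Proof.
elim: N a => [|N IH] a //=.
apply: uf_eq => // i; exact: IH.
Qed.

Lemma evalA_funA N f (a : 'I_(far f) -> AA N) kk :
  evalA (funA a) kk = @fun_i tau (B (jof kk)) f (fun l => evalA (a l) kk).
Proof.
elim: N a kk => [|N IH] a //= [kk i] /=; by rewrite IH.
Qed.

Lemma inH_jof N (P : J -> Prop) : @inH N (fun kk => P (jof kk)) <-> G P.
Proof.
elim: N => [|N IH] //=.
rewrite -IH; exact: uf_const.
Qed.

Lemma inH_S N (Q : IX N -> Prop) : @inH N.+1 (fun p => Q p.1) <-> inH Q.
Proof. exact: uf_const. Qed.

Lemma eqA_refl N (a : AA N) : eqA a a.
Proof. apply/eqA_inH; by apply: (uf_up (inH_uf N)) (uf_full (inH_uf N)). Qed.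

Lemma eqA_sym N (a b : AA N) : eqA a b -> eqA b a.
Proof. move/eqA_inH => H; apply/eqA_inH; by apply: (uf_up (inH_uf N)) H. Qed.

Lemma eqA_trans N (a b c : AA N) : eqA a b -> eqA b c -> eqA a c.
Proof.
move/eqA_inH => H1 /eqA_inH H2; apply/eqA_inH.
by apply: (uf_up (inH_uf N)) (uf_cap (inH_uf N) H1 H2) => k [-> ->].
Qed.

Local Unset Implicit Arguments.
Inductive Lift (n : nat) (a : AA n) : forall M : nat, AA M -> Prop :=
| Lrefl : Lift n a n a
| Lstep : forall M (b : AA M), Lift n a M b -> Lift n a M.+1 (fun _ : I M => b).
Local Set Implicit Arguments.

Lemma Lup d n (a : AA n) : Lift n a (d + n) (up d a).
Proof. elim: d => [|d IH] /=; [exact: Lrefl | exact: Lstep]. Qed.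

Lemma Lcast n (a : AA n) M1 M2 (b : AA M1) (e : M1 = M2) :
  Lift n a M1 b -> Lift n a M2 (eq_rect M1 AA b M2 e).
Proof. by case: M2 / e. Qed.

Lemma Lchar n (a : AA n) M b : Lift n a M b ->
  exists d (e : d + n = M), b = eq_rect (d + n) AA (up d a) M e.
Proof.
elim=> [|M' b' _ [d [e E]]].
- by exists 0, erefl.
- subst b'; case: M' / e => /=; by exists d.+1, erefl.
Qed.

Lemma Lle n (a : AA n) M b : Lift n a M b -> n <= M.
Proof. elim=> // M' b' _ h; exact: leqW. Qed.

Lemma Lex n (a : AA n) M : n <= M -> exists b, Lift n a M b.
Proof.
elim: M => [|M IH] h.
- move: h; rewrite leqn0 => /eqP e; subst n; exists a; exact: Lrefl.
- move: h; rewrite leq_eqVlt => /orP [/eqP e|h].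
  + subst n; exists a; exact: Lrefl.
  + case: (IH h) => b hb; exists (fun _ => b); exact: Lstep.
Qed.

Lemma Ldet n (a : AA n) M b c : Lift n a M b -> Lift n a M c -> b = c.
Proof.
move=> /Lchar [d1 [e1 ->]] /Lchar [d2 [e2 ->]].
have dd : d1 = d2.
  by apply/eqP; rewrite -(eqn_add2r n) e1 e2.
subst d2; by rewrite (eq_irrelevance e1 e2).
Qed.

Lemma Ltrans n (a : AA n) M b M' c : Lift n a M b -> Lift M b M' c -> Lift n a M' c.
Proof. move=> h1 h2; elim: h2 => // M'' c' _ IH; exact: Lstep. Qed.

Lemma Ech n (a : AA n) n' (a' : AA n') :
  eqom (existT AA n a) (existT AA n' a') <->
  exists M b b', Lift n a M b /\ Lift n' a' M b' /\ eqA b b'.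
Proof.
split.
- move=> [d1 [d2 [e H]]] /=.
  exists (d2 + n'), (eq_rect _ AA (up d1 a) _ e), (up d2 a'); split; last split => //.
  + apply: Lcast; exact: Lup.
  + exact: Lup.
- move=> [M [b [b' [h1 [h2 H]]]]].
  move: (Lchar h1) (Lchar h2) => [d1 [e1 E1]] [d2 [e2 E2]]; subst b b'; clear h1 h2.
  case: M / e2 e1 H => e1 H /=.
  by exists d1, d2, e1.
Qed.

Definition LiftT (K : Type) n (y : K -> AA n) M (yM : K -> AA M) :=
  forall l, Lift n (y l) M (yM l).

Lemma LiftT_ex (K : Type) n (y : K -> AA n) M : n <= M -> exists yM : K -> AA M, LiftT y yM.
Proof.
move=> h.
exists (fun l => proj1_sig (constructive_indefinite_description _ (Lex (y l) h))).
move=> l; exact: proj2_sig (constructive_indefinite_description _ (Lex (y l) h)).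
Qed.

Lemma LiftT_ind (K : Type) n (y : K -> AA n) (Q : forall M, (K -> AA M) -> Prop) :
  Q n y ->
  (forall M (yM : K -> AA M), n <= M -> Q M yM -> Q M.+1 (fun l (_ : I M) => yM l)) ->
  forall M (yM : K -> AA M), n <= M -> LiftT y yM -> Q M yM.
Proof.
move=> Q0 QS; elim=> [|M IH] yM hle hL.
- move: hle; rewrite leqn0 => /eqP e; subst n.
  have -> : yM = y by apply: functional_extensionality => l; symmetry; apply: Ldet (hL l); exact: Lrefl.
  exact: Q0.
- move: hle; rewrite leq_eqVlt => /orP [/eqP e|h].
  + subst n.
    have -> : yM = y by apply: functional_extensionality => l; symmetry; apply: Ldet (hL l); exact: Lrefl.
    exact: Q0.
  + case: (LiftT_ex y h) => yM' hL'.
    have -> : yM = fun l _ => yM' l.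
      apply: functional_extensionality => l; symmetry; apply: Ldet (hL l).
      exact: Lstep.
    apply: QS => //; exact: IH.
Qed.

Lemma LeqA n (a a' : AA n) M b b' :
  Lift n a M b -> Lift n a' M b' -> (eqA b b' <-> eqA a a').
Proof.
move=> h h'.
have hle := Lle h.
pose y := fun t : bool => if t then a else a'.
pose Q := fun M (yM : bool -> AA M) => (eqA (yM true) (yM false) <-> eqA a a').
apply: (@LiftT_ind bool n y Q _ _ M (fun t => if t then b else b') hle).
- by rewrite /Q /y /=.
- move=> M' yM _; rewrite /Q /= => <-; exact: uf_const.
- by case.
Qed.

Lemma Eany n (a : AA n) n' (a' : AA n') L b b' :
  eqom (existT AA n a) (existT AA n' a') -> Lift n a L b -> Lift n' a' L b' -> eqA b b'.
Proof.
move=> /Ech [M0 [b0 [b0' [h0 [h0' H]]]]] hb hb'.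
have [c hc] := Lex b (leq_addr M0 L).
have [c0 hc0] := Lex b0 (leq_addl L M0).
have [c' hc'] := Lex b' (leq_addr M0 L).
have [c0' hc0'] := Lex b0' (leq_addl L M0).
have e1 : c = c0 by apply: Ldet (Ltrans hb hc) (Ltrans h0 hc0).
have e2 : c' = c0' by apply: Ldet (Ltrans hb' hc') (Ltrans h0' hc0').
subst c0 c0'.
apply/(LeqA hc hc'); apply/(LeqA hc0 hc0'); exact: H.
Qed.

Lemma Lift_eqom n (a : AA n) M b : Lift n a M b -> eqom (existT AA n a) (existT AA M b).
Proof. move=> h; apply/Ech; exists M, b, b; do 2?split => //; [exact: Lrefl|exact: eqA_refl]. Qed.

Lemma eqom_refl x : eqom x x.
Proof. case: x => n a; apply: Lift_eqom; exact: Lrefl. Qed.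

Lemma eqom_sym x y : eqom x y -> eqom y x.
Proof.
case: x => n a; case: y => n' a' /Ech [M [b [b' [h [h' H]]]]].
apply/Ech; exists M, b', b; do 2?split => //; exact: eqA_sym.
Qed.

Lemma eqom_trans x y z : eqom x y -> eqom y z -> eqom x z.
Proof.
case: x => n1 a1; case: y => n2 a2; case: z => n3 a3 H12 H23.
pose L := n1 + n2 + n3.
have l1 : n1 <= L by rewrite /L -addnA leq_addr.
have l2 : n2 <= L by rewrite /L addnAC leq_addl.
have l3 : n3 <= L by rewrite /L leq_addl.
have [b1 h1] := Lex a1 l1.
have [b2 h2] := Lex a2 l2.
have [b3 h3] := Lex a3 l3.
apply/Ech; exists L, b1, b3; do 2?split => //.
apply: eqA_trans (Eany H12 h1 h2) (Eany H23 h2 h3).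
Qed.

Lemma Qcoh (K : Type) (b : nat) (Q : forall M, (K -> AA M) -> Prop) :
  (forall M (y : K -> AA M), b <= M -> (Q M.+1 (fun l _ => y l) <-> Q M y)) ->
  (forall M (y y' : K -> AA M), b <= M -> (forall l, eqA (y l) (y' l)) -> Q M y -> Q M y') ->
  forall n (y : K -> AA n) N (a : K -> AA N), b <= n -> b <= N ->
  (forall l, eqom (existT AA n (y l)) (existT AA N (a l))) -> (Q n y <-> Q N a).
Proof.
move=> Hstep Hresp n y N a bn bN He.
pose L := n + N.
have lL1 : n <= L by rewrite /L leq_addr.
have lL2 : N <= L by rewrite /L leq_addl.
have [yL hy] := LiftT_ex y lL1.
have [aL ha] := LiftT_ex a lL2.
have key : forall n0 (y0 : K -> AA n0) (yL0 : K -> AA L), b <= n0 -> n0 <= L -> LiftT y0 yL0 -> (Q L yL0 <-> Q n0 y0).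
  move=> n0 y0 yL0 bn0 hn0 hL.
  apply: (@LiftT_ind K n0 y0 (fun M yM => Q M yM <-> Q n0 y0)) => //.
  move=> M yM hM <-; apply: Hstep; exact: leq_trans hM.
have bL : b <= L by exact: leq_trans lL1.
rewrite -(key _ _ _ bn lL1 hy) -(key _ _ _ bN lL2 ha).
have E : forall l, eqA (yL l) (aL l) by move=> l; exact: Eany (He l) (hy l) (ha l).
split; apply: Hresp => // l; last apply: eqA_sym; exact: E.
Qed.

Lemma relA_coh P n (y : 'I_(rar P) -> AA n) N (a : 'I_(rar P) -> AA N) :
  (forall l, eqom (existT AA n (y l)) (existT AA N (a l))) -> (relA y <-> relA a).
Proof.
apply: (@Qcoh _ 0 (fun M y => relA y)) => //.
- move=> M y0 _ /=; exact: uf_const.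
- move=> M y0 y' _ E /relA_inH H; apply/relA_inH.
  have E' : inH (fun kk => forall l, evalA (y0 l) kk = evalA (y' l) kk).
    apply: uf_fin; first exact: inH_uf.
    move=> l; apply/eqA_inH; exact: E.
  apply: (uf_up (inH_uf M)) (uf_cap (inH_uf M) H E') => kk [h1 h2].
  have -> : (fun l => evalA (y' l) kk) = (fun l => evalA (y0 l) kk).
    by apply: functional_extensionality => l; rewrite h2.
  exact: h1.
Qed.

Lemma funA_coh f L (w : 'I_(far f) -> AA L) N (wN : 'I_(far f) -> AA N) :
  (forall l, eqom (existT AA L (w l)) (existT AA N (wN l))) ->
  eqom (existT AA L (funA w)) (existT AA N (funA wN)).
Proof.
move=> He.
pose K := L + N.
have lK1 : L <= K by rewrite /K leq_addr.
have lK2 : N <= K by rewrite /K leq_addl.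
have [wK hw] := LiftT_ex w lK1.
have [wNK hwN] := LiftT_ex wN lK2.
have key : forall n0 (y0 : 'I_(far f) -> AA n0) (yK : 'I_(far f) -> AA K), n0 <= K -> LiftT y0 yK ->
   Lift n0 (funA y0) K (funA yK).
  move=> n0 y0 yK hn0 hL.
  apply: (@LiftT_ind _ n0 y0 (fun M yM => Lift n0 (funA y0) M (funA yM))) => //.
  - exact: Lrefl.
  - move=> M yM _ h; exact: Lstep.
apply/Ech; exists K, (funA wK), (funA wNK); split; first exact: key.
split; first exact: key.
apply/eqA_inH.
have E' : inH (fun kk => forall l, evalA (wK l) kk = evalA (wNK l) kk).
  apply: uf_fin; first exact: inH_uf.
  move=> l; apply/eqA_inH; exact: Eany (He l) (hw l) (hwN l).
apply: (uf_up (inH_uf K)) E' => kk h.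
rewrite !evalA_funA; congr fun_i; apply: functional_extensionality => l; exact: h.
Qed.

Local Unset Implicit Arguments.
Inductive Tower (m N : nat) (R0 : ('I_m.+1 -> AA N) -> Prop) :
  forall M : nat, (('I_m.+1 -> AA M) -> Prop) -> Prop :=
| Trefl : Tower m N R0 N R0
| Tstep : forall M S, Tower m N R0 M S ->
    Tower m N R0 M.+1 (fun a : 'I_m.+1 -> AA M.+1 => @F M (fun i => S (fun l => a l i))).
Local Set Implicit Arguments.

Local Notation relUp R d := (@relUp tau J B I F _ _ R d).

Lemma Tower_relUp m N R0 d : Tower m N R0 (d + N) (relUp R0 d).
Proof. elim: d => [|d IH] /=; [exact: Trefl | exact: Tstep]. Qed.

Lemma Tchar m N R0 M S : Tower m N R0 M S ->
  exists d (e : d + N = M), S = eq_rect (d + N) (fun M => ('I_m.+1 -> AA M) -> Prop) (relUp R0 d) M e.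
Proof.
elim=> [|M' S' _ [d [e E]]].
- by exists 0, erefl.
- subst S'; case: M' / e => /=; by exists d.+1, erefl.
Qed.

Lemma Tdet m N R0 M S S' : Tower m N R0 M S -> Tower m N R0 M S' -> S = S'.
Proof.
move=> /Tchar [d1 [e1 ->]] /Tchar [d2 [e2 ->]].
have dd : d1 = d2 by apply/eqP; rewrite -(eqn_add2r N) e1 e2.
subst d2; by rewrite (eq_irrelevance e1 e2).
Qed.

Lemma Tle m N R0 M S : Tower m N R0 M S -> N <= M.
Proof. elim=> // M' S' _ h; exact: leqW. Qed.

Lemma Tex m N R0 M : N <= M -> exists S, Tower m N R0 M S.
Proof.
elim: M => [|M IH] h.
- move: h; rewrite leqn0 => /eqP e; subst N; exists R0; exact: Trefl.
- move: h; rewrite leq_eqVlt => /orP [/eqP e|h].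
  + subst N; exists R0; exact: Trefl.
  + case: (IH h) => S hS; eexists; exact: Tstep hS.
Qed.

Lemma Ttrans m N R0 M S M' S' : Tower m N R0 M S -> Tower m M S M' S' -> Tower m N R0 M' S'.
Proof. move=> h1 h2; elim: h2 => // M'' c' _ IH; exact: Tstep. Qed.

Definition respE m N (R0 : ('I_m.+1 -> AA N) -> Prop) :=
  forall y y', (forall l, eqA (y l) (y' l)) -> R0 y -> R0 y'.

Lemma Tresp m N R0 M S : respE R0 -> Tower m N R0 M S -> respE S.
Proof.
move=> hR; elim=> // M' S' _ IH y y' E /= H.
have E' : @F M' (fun i => forall l, eqA (y l i) (y' l i)).
  apply: uf_fin; first exact: HF.
  move=> l; exact: (E l).
apply: (uf_up (HF M')) (uf_cap (HF M') H E') => i [h1 h2].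
exact: IH h1.
Qed.

Lemma Tcoh m N R0 M1 S1 M2 S2 (y1 : 'I_m.+1 -> AA M1) (y2 : 'I_m.+1 -> AA M2) :
  respE R0 -> Tower m N R0 M1 S1 -> Tower m N R0 M2 S2 ->
  (forall l, eqom (existT AA M1 (y1 l)) (existT AA M2 (y2 l))) -> (S1 y1 <-> S2 y2).
Proof.
move=> hR h1 h2 He.
pose Q := fun M (y : 'I_m.+1 -> AA M) => forall S, Tower m N R0 M S -> S y.
have QE : forall M S y, Tower m N R0 M S -> (Q M y <-> S y).
  move=> M S y hS; split; first by move/(_ S hS).
  by move=> H S' hS'; rewrite -(Tdet hS hS').
rewrite -(QE _ _ _ h1) -(QE _ _ _ h2).
apply: (@Qcoh _ N Q) => //; try exact: Tle h1; try exact: Tle h2.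
- move=> M y bM.
  have [S hS] := Tex R0 bM.
  rewrite (QE _ _ _ hS) (QE _ _ _ (@Tstep _ _ _ _ _ hS)) /=; exact: uf_const.
- move=> M y y' bM E.
  have [S hS] := Tex R0 bM.
  rewrite (QE _ _ _ hS) (QE _ _ _ hS); exact: (Tresp hR hS).
Qed.

Local Notation Aom := (Aom B I).

Definition RelK m (j : J) := ('I_m.+1 -> dom (B j)) -> Prop.

Definition RnOf m N (Rk : forall kk : IX N, RelK m (jof kk)) : ('I_m.+1 -> AA N) -> Prop :=
  fun y => inH (fun kk => Rk kk (fun l => evalA (y l) kk)).

Lemma RnOf_resp m N (Rk : forall kk : IX N, RelK m (jof kk)) : respE (RnOf Rk).
Proof.
move=> y y' E H.
have E' : inH (fun kk => forall l, evalA (y l) kk = evalA (y' l) kk).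
  apply: uf_fin; first exact: inH_uf.
  move=> l; apply/eqA_inH; exact: E.
apply: (uf_up (inH_uf N)) (uf_cap (inH_uf N) H E') => kk [h1 h2].
have -> : (fun l => evalA (y' l) kk) = (fun l => evalA (y l) kk).
  by apply: functional_extensionality => l; rewrite h2.
exact: h1.
Qed.

Definition repr m (R : ('I_m.+1 -> Aom) -> Prop) N (Rk : forall kk : IX N, RelK m (jof kk)) :=
  forall M S, Tower m N (RnOf Rk) M S ->
  forall (y : 'I_m.+1 -> AA M) (x : 'I_m.+1 -> Aom),
  (forall l, eqom (x l) (existT AA M (y l))) -> (R x <-> S y).

Lemma UL_repr m n (Rn : ('I_m.+1 -> AA n) -> Prop) (Rk : forall kk : IX n, RelK m (jof kk))
  (R : ('I_m.+1 -> Aom) -> Prop) :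
  (forall a, Rn a <-> RnOf Rk a) ->
  (forall x, R x <-> exists d (y : 'I_m.+1 -> AA (d + n)),
       (forall l, eqom (x l) (existT AA (d + n) (y l))) /\ relUp Rn d y) ->
  repr R Rk.
Proof.
move=> HRn HR.
have eR : Rn = RnOf Rk.
  apply: functional_extensionality => a; apply: propositional_extensionality; exact: HRn.
subst Rn.
move=> M S hT y x hx; rewrite HR; split.
- move=> [d [y' [hx' hr]]].
  have He : forall l, eqom (existT AA (d + n) (y' l)) (existT AA M (y l)).
    move=> l; apply: eqom_trans (hx l); apply: eqom_sym; exact: hx'.
  have T0 := Tower_relUp (RnOf Rk) d.
  exact: (proj1 (Tcoh (@RnOf_resp _ _ Rk) T0 hT He) hr).
- move=> H.
  move: (Tchar hT) => [d [e E]]; subst S; clear hT.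
  case: M / e y hx H => y hx H /=.
  by exists d, y.
Qed.

Local Unset Implicit Arguments.
Inductive SecLift (E : J -> Type) (N : nat) (e : forall kk : IX N, E (jof kk)) :
  forall M : nat, (forall kk : IX M, E (jof kk)) -> Prop :=
| SLrefl : SecLift E N e N e
| SLstep : forall M eM, SecLift E N e M eM ->
    SecLift E N e M.+1 (fun p : IX M.+1 => eM p.1).
Local Set Implicit Arguments.

Lemma SL_ex (E : J -> Type) N (e : forall kk : IX N, E (jof kk)) M :
  N <= M -> exists eM, SecLift E N e M eM.
Proof.
elim: M => [|M IH] h.
- move: h; rewrite leqn0 => /eqP ee; subst N; exists e; exact: SLrefl.
- move: h; rewrite leq_eqVlt => /orP [/eqP ee|h].
  + subst N; exists e; exact: SLrefl.
  + case: (IH h) => eM hS; eexists; exact: (@SLstep _ _ _ _ _ hS).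
Qed.

Lemma SL_inH (E : J -> Type) N e M eM (Q : forall j, E j -> Prop) :
  SecLift E N e M eM ->
  (inH (fun kk => Q _ (eM kk)) <-> inH (fun kk => Q _ (e kk))).
Proof. elim=> // M' eM' _ <-; exact: (inH_S (fun kk => Q _ (eM' kk))). Qed.

Lemma SL_map (E E' : J -> Type) (f : forall j, E j -> E' j) N e M eM :
  SecLift E N e M eM -> SecLift E' N (fun kk => f _ (e kk)) M (fun kk => f _ (eM kk)).
Proof.
elim=> [|M' eM' _ IH]; first exact: SLrefl.
exact: (@SLstep _ _ _ _ _ IH).
Qed.

Lemma SL_sect N s M sM : SecLift (fun j => dom (B j)) N s M sM -> Lift N (sect s) M (sect sM).
Proof. elim=> [|M' sM' _ IH]; [exact: Lrefl | exact (Lstep _ _ _ _ IH)]. Qed.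

Lemma SL_tower m N Rk M RkM : SecLift (RelK m) N Rk M RkM -> Tower m N (RnOf Rk) M (RnOf RkM).
Proof. elim=> [|M' RkM' _ IH]; [exact: Trefl | exact: (@Tstep _ _ _ _ _ IH)]. Qed.

Lemma SL_repr m N Rk M RkM (R : ('I_m.+1 -> Aom) -> Prop) :
  SecLift (RelK m) N Rk M RkM -> repr R Rk -> repr R RkM.
Proof.
move=> hS hR M' S hT; apply: hR; exact: Ttrans (SL_tower hS) hT.
Qed.

Local Notation AS := (Aom_str B G F).
Local Notation UL := (@Upsilon_lim tau J B G I F).

Definition Env (j : J) := ((nat -> dom (B j)) * (forall m, nat -> RelK m j))%type.

Definition satk (j : J) (ev : Env j) (psi : formula tau) : Prop :=
  @sat tau (sstr_of (B j)) (fun _ _ => True) ev.1 ev.2 psi.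

Definition satA (rho : nat -> Aom) (sigma : forall m, nat -> RelT AS m) psi :=
  @sat tau AS UL rho sigma psi.

Fixpoint occT (x : nat) (t : term tau) : Prop :=
  match t with
  | TVar y => x = y
  | TFun f args => exists l, occT x (args l)
  end.

Fixpoint occV (x : nat) (p : formula tau) : Prop :=
  match p with
  | FEq t1 t2 => occT x t1 \/ occT x t2
  | FRel P args => exists l, occT x (args l)
  | FVar X m args => exists l, occT x (args l)
  | FNot p => occV x p
  | FAnd p q | FOr p q | FImp p q => occV x p \/ occV x q
  | FEx _ p | FAll _ p | FExR _ _ p | FAllR _ _ p => occV x p
  end.

Fixpoint occR (X m : nat) (p : formula tau) : Prop :=
  match p with
  | FEq _ _ | FRel _ _ => False
  | FVar Y m' args => Y = X /\ m' = m
  | FNot p => occR X m p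
  | FAnd p q | FOr p q | FImp p q => occR X m p \/ occR X m q
  | FEx _ p | FAll _ p | FExR _ _ p | FAllR _ _ p => occR X m p
  end.

Definition HypV (rho : nat -> Aom) N (e : forall kk : IX N, Env (jof kk)) psi :=
  forall x, occV x psi -> eqom (rho x) (existT AA N (sect (fun kk => (e kk).1 x))).

Definition HypR (sigma : forall m, nat -> RelT AS m) N (e : forall kk : IX N, Env (jof kk)) psi :=
  forall X m, occR X m psi -> repr (sigma m X) (fun kk => (e kk).2 m X).

Lemma teval_los (rho : nat -> Aom) N (e : forall kk : IX N, Env (jof kk)) t :
  (forall x, occT x t -> eqom (rho x) (existT AA N (sect (fun kk => (e kk).1 x)))) ->
  eqom (@teval tau AS rho t)
       (existT AA N (sect (fun kk => @teval tau (sstr_of (B (jof kk))) (e kk).1 t))).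
Proof.
elim: t => [x|f args IH] H /=.
- exact: H.
- have IH' : forall l, eqom (@teval tau AS rho (args l))
       (existT AA N (sect (fun kk => @teval tau (sstr_of (B (jof kk))) (e kk).1 (args l)))).
    move=> l; apply: IH => x hx; apply: H; by exists l.
  rewrite /funom.
  match goal with |- context [epsilon ?i ?P] =>
    have hw := epsilon_spec i P
      (ex_intro _ (existT (fun n => 'I_(far f) -> AA n) N (fun l => sect (fun kk => @teval tau (sstr_of (B (jof kk))) (e kk).1 (args l)))) IH') end.
  set w := epsilon _ _ in hw *.
  have hc : forall l, eqom (existT AA (projT1 w) (projT2 w l))
      (existT AA N (sect (fun kk => @teval tau (sstr_of (B (jof kk))) (e kk).1 (args l)))).
    move=> l; exact: eqom_trans (eqom_sym (hw l)) (IH' l).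
  apply: eqom_trans (funA_coh hc) _.
  have -> : funA (fun l => sect (fun kk => @teval tau (sstr_of (B (jof kk))) (e kk).1 (args l)))
     = sect (fun kk => @fun_i tau (B (jof kk)) f (fun l => @teval tau (sstr_of (B (jof kk))) (e kk).1 (args l))).
    rewrite -[LHS]sect_evalA; congr sect; apply: functional_extensionality_dep => kk.
    rewrite evalA_funA; congr fun_i; apply: functional_extensionality => l.
    by rewrite evalA_sect.
  exact: eqom_refl.
Qed.

Lemma eqom_same N (a b : AA N) : eqom (existT AA N a) (existT AA N b) <-> eqA a b.
Proof.
split.
- move=> H; exact: Eany H (Lrefl _ _) (Lrefl _ _).
- move=> H; apply/Ech; exists N, a, b; do 2?split => //; exact: Lrefl.
Qed.

Lemma raise_V N e M eM y r : SecLift Env N e M eM ->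
  eqom r (existT AA N (sect (fun kk => (e kk).1 y))) ->
  eqom r (existT AA M (sect (fun kk => (eM kk).1 y))).
Proof.
move=> hS H; apply: eqom_trans H _; apply: Lift_eqom; apply: SL_sect.
exact: (@SL_map Env (fun j => dom (B j)) (fun j ev => ev.1 y) _ _ _ _ hS).
Qed.

Lemma raise_R N e M eM m X (R : ('I_m.+1 -> Aom) -> Prop) : SecLift Env N e M eM ->
  repr R (fun kk => (e kk).2 m X) -> repr R (fun kk => (eM kk).2 m X).
Proof.
move=> hS; apply: SL_repr.
exact: (@SL_map Env (RelK m) (fun j ev => ev.2 m X) _ _ _ _ hS).
Qed.

Lemma updR_repr N (s : forall kk : IX N, forall m, nat -> RelK m (jof kk))
  (sigma : forall m, nat -> RelT AS m) m X (R : RelT AS m)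
  (Rk : forall kk : IX N, RelK m (jof kk)) m' X' :
  repr R Rk -> (~ (m' = m /\ X' = X) -> repr (sigma m' X') (fun kk => s kk m' X')) ->
  repr (@updR tau AS sigma m X R m' X')
       (fun kk => @updR tau (sstr_of (B (jof kk))) (s kk) m X (Rk kk) m' X').
Proof.
move=> hR hs; rewrite /updR.
case: (Nat.eq_dec m m') => [E|NE].
- case: m' / E hs => hs /=.
  case EX: (Nat.eqb X' X) => //.
  apply: hs => -[_ E]; move/Nat.eqb_neq: EX; by apply.
- apply: hs => -[E _]; by apply: NE.
Qed.

Lemma UL_repr' m (R : ('I_m.+1 -> Aom) -> Prop) : UL R ->
  exists n0 (Rk0 : forall kk : IX n0, RelK m (jof kk)), repr R Rk0.
Proof.
move=> [n [Rn [[Rk dec] HR]]].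
exists n, Rk; exact: UL_repr dec HR.
Qed.

Lemma UL_of m N (Sg : forall kk : IX N, RelK m (jof kk)) :
  exists R : ('I_m.+1 -> Aom) -> Prop, UL R /\ repr R Sg.
Proof.
pose R := fun x : 'I_m.+1 -> Aom => exists d (y : 'I_m.+1 -> AA (d + N)),
       (forall l, eqom (x l) (existT AA (d + N) (y l))) /\ relUp (RnOf Sg) d y.
exists R; split.
- exists N, (RnOf Sg); split => //; by exists Sg.
- by apply: (@UL_repr m N (RnOf Sg) Sg R).
Qed.

Lemma choose_sec N (P : forall kk : IX N, dom (B (jof kk)) -> Prop) :
  exists g : forall kk : IX N, dom (B (jof kk)), forall kk, (exists b, P kk b) -> P kk (g kk).
Proof.
exists (fun kk => epsilon (inhabits (dom_pt (B (jof kk)))) (P kk)).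
move=> kk; exact: epsilon_spec.
Qed.

Lemma choose_rel m N (P : forall kk : IX N, RelK m (jof kk) -> Prop) :
  exists g : forall kk : IX N, RelK m (jof kk), forall kk, (exists b, P kk b) -> P kk (g kk).
Proof.
exists (fun kk => epsilon (inhabits (fun _ => True)) (P kk)).
move=> kk; exact: epsilon_spec.
Qed.

Lemma HypV_upd rho N (e : forall kk : IX N, Env (jof kk)) p x a
  (g : forall kk : IX N, dom (B (jof kk))) :
  eqom a (existT AA N (sect g)) ->
  (forall y, occV y p -> y <> x -> eqom (rho y) (existT AA N (sect (fun kk => (e kk).1 y)))) ->
  HypV (@upd1 tau AS rho x a) (fun kk => (@upd1 tau (sstr_of (B (jof kk))) (e kk).1 x (g kk), (e kk).2)) p.
Proof.
move=> ha H y hy; rewrite /upd1 /=.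
case E: (Nat.eqb y x) => //.
apply: H => //; exact/Nat.eqb_neq.
Qed.

Lemma los (psi : formula tau) : forall N (e : forall kk : IX N, Env (jof kk)) rho sigma,
  HypV rho e psi -> HypR sigma e psi ->
  (satA rho sigma psi <-> inH (fun kk => satk (e kk) psi)).
Proof.
elim: psi.
-
  move=> t1 t2 N e rho sigma HV HR.
  have h1 := @teval_los rho N e t1 (fun x hx => HV x (or_introl hx)).
  have h2 := @teval_los rho N e t2 (fun x hx => HV x (or_intror hx)).
  rewrite /satA /satk /=.
  have -> : eqom (@teval tau AS rho t1) (@teval tau AS rho t2) <->
     eqom (existT AA N (sect (fun kk => @teval tau (sstr_of (B (jof kk))) (e kk).1 t1)))
          (existT AA N (sect (fun kk => @teval tau (sstr_of (B (jof kk))) (e kk).1 t2))).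
    split => H; [exact: eqom_trans (eqom_sym h1) (eqom_trans H h2) |
                 exact: eqom_trans h1 (eqom_trans H (eqom_sym h2))].
  rewrite eqom_same eqA_inH; apply: (uf_eq (inH_uf N)) => kk.
  by rewrite !evalA_sect.
-
  move=> P args N e rho sigma HV HR.
  have ht : forall l, eqom (@teval tau AS rho (args l))
      (existT AA N (sect (fun kk => @teval tau (sstr_of (B (jof kk))) (e kk).1 (args l)))).
    move=> l; apply: teval_los => x hx; apply: HV; by exists l.
  rewrite /satA /satk /=.
  have -> : @relom tau J B G I F P (fun l => @teval tau AS rho (args l)) <->
     relA (fun l => sect (fun kk => @teval tau (sstr_of (B (jof kk))) (e kk).1 (args l))).
    split.
    + move=> [n [y [hx hr]]].
      exact: (proj1 (relA_coh (fun l => eqom_trans (eqom_sym (hx l)) (ht l))) hr).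
    + move=> H; by exists N, (fun l => sect (fun kk => @teval tau (sstr_of (B (jof kk))) (e kk).1 (args l))).
  rewrite relA_inH; apply: (uf_eq (inH_uf N)) => kk.
  suff -> : (fun l => evalA (sect (fun kk0 => @teval tau (sstr_of (B (jof kk0))) (e kk0).1 (args l))) kk)
     = (fun l => @teval tau (sstr_of (B (jof kk))) (e kk).1 (args l)) by [].
  apply: functional_extensionality => l; exact: evalA_sect.
-
  move=> X m args N e rho sigma HV HR.
  have ht : forall l, eqom (@teval tau AS rho (args l))
      (existT AA N (sect (fun kk => @teval tau (sstr_of (B (jof kk))) (e kk).1 (args l)))).
    move=> l; apply: teval_los => x hx; apply: HV; by exists l.
  rewrite /satA /satk /=.
  rewrite (HR X m (conj erefl erefl) N _ (Trefl _ _ _) _ _ ht) /RnOf.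
  apply: (uf_eq (inH_uf N)) => kk.
  suff -> : (fun l => evalA (sect (fun kk0 => @teval tau (sstr_of (B (jof kk0))) (e kk0).1 (args l))) kk)
     = (fun l => @teval tau (sstr_of (B (jof kk))) (e kk).1 (args l)) by [].
  apply: functional_extensionality => l; exact: evalA_sect.
-
  move=> p IH N e rho sigma HV HR.
  have IHp := IH N e rho sigma HV HR.
  change (~ satA rho sigma p <-> inH (fun kk => ~ satk (e kk) p)).
  rewrite IHp; exact: iff_sym (uf_not (inH_uf N) _).
-
  move=> p IHp q IHq N e rho sigma HV HR.
  have := IHp N e rho sigma (fun x h => HV x (or_introl h)) (fun X m h => HR X m (or_introl h)).
  have := IHq N e rho sigma (fun x h => HV x (or_intror h)) (fun X m h => HR X m (or_intror h)).
  move=> IHq' IHp'.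
  change (satA rho sigma p /\ satA rho sigma q <-> inH (fun kk => satk (e kk) p /\ satk (e kk) q)).
  rewrite IHp' IHq'; exact: iff_sym (uf_and (inH_uf N) _ _).
-
  move=> p IHp q IHq N e rho sigma HV HR.
  have := IHp N e rho sigma (fun x h => HV x (or_introl h)) (fun X m h => HR X m (or_introl h)).
  have := IHq N e rho sigma (fun x h => HV x (or_intror h)) (fun X m h => HR X m (or_intror h)).
  move=> IHq' IHp'.
  change (satA rho sigma p \/ satA rho sigma q <-> inH (fun kk => satk (e kk) p \/ satk (e kk) q)).
  rewrite IHp' IHq'; exact: iff_sym (uf_or (inH_uf N) _ _).
-
  move=> p IHp q IHq N e rho sigma HV HR.
  have := IHp N e rho sigma (fun x h => HV x (or_introl h)) (fun X m h => HR X m (or_introl h)).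
  have := IHq N e rho sigma (fun x h => HV x (or_intror h)) (fun X m h => HR X m (or_intror h)).
  move=> IHq' IHp'.
  change ((satA rho sigma p -> satA rho sigma q) <-> inH (fun kk => satk (e kk) p -> satk (e kk) q)).
  rewrite IHp' IHq'; exact: iff_sym (uf_imp (inH_uf N) _ _).
-
  move=> x p IH N e rho sigma HV HR.
  rewrite /satA /satk /=; split.
  + move=> [[n0 a0] H].
    have lM1 : N <= N + n0 by rewrite leq_addr.
    have lM2 : n0 <= N + n0 by rewrite leq_addl.
    have [eM hSL] := SL_ex e lM1.
    have [aM haM] := Lex a0 lM2.
    have hV : HypV (@upd1 tau AS rho x (existT AA n0 a0))
        (fun kk => (@upd1 tau (sstr_of (B (jof kk))) (eM kk).1 x (evalA aM kk), (eM kk).2)) p.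
      apply: HypV_upd.
      * rewrite sect_evalA; exact: Lift_eqom haM.
      * move=> y hy _; exact: raise_V hSL (HV y hy).
    have hR : HypR sigma (fun kk => (@upd1 tau (sstr_of (B (jof kk))) (eM kk).1 x (evalA aM kk), (eM kk).2)) p.
      move=> X m h; exact: raise_R hSL (HR X m h).
    have := IH _ _ _ _ hV hR; move=> IHp.
    have {}H := proj1 IHp H.
    apply: (proj1 (SL_inH (fun j ev => exists a, @sat tau (sstr_of (B j)) (fun _ _ => True) (@upd1 tau (sstr_of (B j)) ev.1 x a) ev.2 p) hSL)).
    apply: (uf_up (inH_uf _)) H => kk h /=; by exists (evalA aM kk).
  + move=> H.
    have [g hg] := choose_sec (fun kk b => @sat tau (sstr_of (B (jof kk))) (fun _ _ => True) (@upd1 tau (sstr_of (B (jof kk))) (e kk).1 x b) (e kk).2 p).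
    exists (existT AA N (sect g)).
    have hV : HypV (@upd1 tau AS rho x (existT AA N (sect g)))
        (fun kk => (@upd1 tau (sstr_of (B (jof kk))) (e kk).1 x (g kk), (e kk).2)) p.
      apply: HypV_upd; [exact: eqom_refl | move=> y hy _; exact: HV].
    have := IH _ _ _ _ hV HR; move=> IHp.
    apply: (proj2 IHp); apply: (uf_up (inH_uf N)) H => kk h; exact: hg.
-
  move=> x p IH N e rho sigma HV HR.
  rewrite /satA /satk /=; split.
  + move=> H; apply: NNPP => nH.
    have H2 : inH (fun kk => exists b, ~ @sat tau (sstr_of (B (jof kk))) (fun _ _ => True) (@upd1 tau (sstr_of (B (jof kk))) (e kk).1 x b) (e kk).2 p).
      have := proj2 (uf_not (inH_uf N) _) nH.
      apply: (uf_up (inH_uf N)) => kk; exact: not_all_ex_not.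
    have [g hg] := choose_sec (fun kk b => ~ @sat tau (sstr_of (B (jof kk))) (fun _ _ => True) (@upd1 tau (sstr_of (B (jof kk))) (e kk).1 x b) (e kk).2 p).
    have hV : HypV (@upd1 tau AS rho x (existT AA N (sect g)))
        (fun kk => (@upd1 tau (sstr_of (B (jof kk))) (e kk).1 x (g kk), (e kk).2)) p.
      apply: HypV_upd; [exact: eqom_refl | move=> y hy _; exact: HV].
    have := IH _ _ _ _ hV HR; move=> IHp.
    have H3 := proj1 IHp (H _).
    apply: (uf_empty (inH_uf N)); apply: (uf_up (inH_uf N)) (uf_cap (inH_uf N) H3 H2) => kk [h1 h2].
    exact: (hg kk h2 h1).
  + move=> H [n0 a0].
    have lM1 : N <= N + n0 by rewrite leq_addr.
    have lM2 : n0 <= N + n0 by rewrite leq_addl.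
    have [eM hSL] := SL_ex e lM1.
    have [aM haM] := Lex a0 lM2.
    have hV : HypV (@upd1 tau AS rho x (existT AA n0 a0))
        (fun kk => (@upd1 tau (sstr_of (B (jof kk))) (eM kk).1 x (evalA aM kk), (eM kk).2)) p.
      apply: HypV_upd.
      * rewrite sect_evalA; exact: Lift_eqom haM.
      * move=> y hy _; exact: raise_V hSL (HV y hy).
    have hR : HypR sigma (fun kk => (@upd1 tau (sstr_of (B (jof kk))) (eM kk).1 x (evalA aM kk), (eM kk).2)) p.
      move=> X m h; exact: raise_R hSL (HR X m h).
    have := IH _ _ _ _ hV hR; move=> IHp.
    apply: (proj2 IHp).
    have H' := proj2 (SL_inH (fun j ev => forall a, @sat tau (sstr_of (B j)) (fun _ _ => True) (@upd1 tau (sstr_of (B j)) ev.1 x a) ev.2 p) hSL) H.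
    apply: (uf_up (inH_uf _)) H' => kk h; exact: h.
-
  move=> X m p IH N e rho sigma HV HR.
  rewrite /satA /satk /=; split.
  + move=> [R [hUL H]].
    have [n0 [Rk0 hR0]] := UL_repr' hUL.
    have lM1 : N <= N + n0 by rewrite leq_addr.
    have lM2 : n0 <= N + n0 by rewrite leq_addl.
    have [eM hSL] := SL_ex e lM1.
    have [Rk0M hSL0] := @SL_ex (RelK m) _ Rk0 _ lM2.
    have hRM := SL_repr hSL0 hR0.
    have hV : HypV rho (fun kk => ((eM kk).1, @updR tau (sstr_of (B (jof kk))) (eM kk).2 m X (Rk0M kk))) p.
      move=> y hy; exact: raise_V hSL (HV y hy).
    have hR : HypR (@updR tau AS sigma m X R) (fun kk => ((eM kk).1, @updR tau (sstr_of (B (jof kk))) (eM kk).2 m X (Rk0M kk))) p.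
      move=> X' m' h; apply: updR_repr hRM _ => _.
      exact: raise_R hSL (HR X' m' h).
    have := IH _ _ _ _ hV hR; move=> IHp.
    have {}H := proj1 IHp H.
    apply: (proj1 (SL_inH (fun j ev => exists R : RelK m j, True /\ @sat tau (sstr_of (B j)) (fun _ _ => True) ev.1 (@updR tau (sstr_of (B j)) ev.2 m X R) p) hSL)).
    apply: (uf_up (inH_uf _)) H => kk h /=; by exists (Rk0M kk).
  + move=> H.
    have [Sg hSg] := choose_rel (fun kk (S : RelK m (jof kk)) => True /\ @sat tau (sstr_of (B (jof kk))) (fun _ _ => True) (e kk).1 (@updR tau (sstr_of (B (jof kk))) (e kk).2 m X S) p).
    have [R [hUL hRr]] := UL_of Sg.
    exists R; split => //.
    have hR : HypR (@updR tau AS sigma m X R) (fun kk => ((e kk).1, @updR tau (sstr_of (B (jof kk))) (e kk).2 m X (Sg kk))) p.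
      move=> X' m' h; apply: updR_repr hRr _ => _; exact: HR.
    have IHp := IH N (fun kk => ((e kk).1, @updR tau (sstr_of (B (jof kk))) (e kk).2 m X (Sg kk))) rho _ HV hR.
    apply: (proj2 IHp); apply: (uf_up (inH_uf N)) H => kk h; by case: (hSg kk h).
-
  move=> X m p IH N e rho sigma HV HR.
  rewrite /satA /satk /=; split.
  + move=> H; apply: NNPP => nH.
    have H2 : inH (fun kk => exists S : RelK m (jof kk), ~ (True -> @sat tau (sstr_of (B (jof kk))) (fun _ _ => True) (e kk).1 (@updR tau (sstr_of (B (jof kk))) (e kk).2 m X S) p)).
      have := proj2 (uf_not (inH_uf N) _) nH.
      apply: (uf_up (inH_uf N)) => kk; exact: not_all_ex_not.
    have [Sg hSg] := choose_rel (fun kk (S : RelK m (jof kk)) => ~ (True -> @sat tau (sstr_of (B (jof kk))) (fun _ _ => True) (e kk).1 (@updR tau (sstr_of (B (jof kk))) (e kk).2 m X S) p)).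
    have [R [hUL hRr]] := UL_of Sg.
    have hR : HypR (@updR tau AS sigma m X R) (fun kk => ((e kk).1, @updR tau (sstr_of (B (jof kk))) (e kk).2 m X (Sg kk))) p.
      move=> X' m' h; apply: updR_repr hRr _ => _; exact: HR.
    have IHp := IH N (fun kk => ((e kk).1, @updR tau (sstr_of (B (jof kk))) (e kk).2 m X (Sg kk))) rho _ HV hR.
    have H3 := proj1 IHp (H _ hUL).
    apply: (uf_empty (inH_uf N)); apply: (uf_up (inH_uf N)) (uf_cap (inH_uf N) H3 H2) => kk [h1 h2].
    exact: (hSg kk h2 (fun _ => h1)).
  + move=> H R hUL.
    have [n0 [Rk0 hR0]] := UL_repr' hUL.
    have lM1 : N <= N + n0 by rewrite leq_addr.
    have lM2 : n0 <= N + n0 by rewrite leq_addl.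
    have [eM hSL] := SL_ex e lM1.
    have [Rk0M hSL0] := @SL_ex (RelK m) _ Rk0 _ lM2.
    have hRM := SL_repr hSL0 hR0.
    have hV : HypV rho (fun kk => ((eM kk).1, @updR tau (sstr_of (B (jof kk))) (eM kk).2 m X (Rk0M kk))) p.
      move=> y hy; exact: raise_V hSL (HV y hy).
    have hR : HypR (@updR tau AS sigma m X R) (fun kk => ((eM kk).1, @updR tau (sstr_of (B (jof kk))) (eM kk).2 m X (Rk0M kk))) p.
      move=> X' m' h; apply: updR_repr hRM _ => _.
      exact: raise_R hSL (HR X' m' h).
    have := IH _ _ _ _ hV hR; move=> IHp.
    apply: (proj2 IHp).
    have H' := proj2 (SL_inH (fun j ev => forall R : RelK m j, True -> @sat tau (sstr_of (B j)) (fun _ _ => True) ev.1 (@updR tau (sstr_of (B j)) ev.2 m X R) p) hSL) H.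
    apply: (uf_up (inH_uf _)) H' => kk h; exact: h.
Qed.

Lemma fin_bound (K : finType) (Q : K -> nat -> Prop) :
  (forall l N M, N <= M -> Q l N -> Q l M) -> (forall l, exists N, Q l N) ->
  exists N, forall l, Q l N.
Proof.
move=> Hup Hex.
have : exists N, forall l, l \in enum K -> Q l N.
  elim: (enum K) => [|a s [N2 IH]]; first by exists 0.
  have [N1 h1] := Hex a.
  exists (N1 + N2) => l; rewrite in_cons => /orP [/eqP ->|hl].
  - apply: Hup h1; exact: leq_addr.
  - apply: Hup (IH l hl); exact: leq_addl.
move=> [N h]; exists N => l; apply: h; by rewrite mem_enum.
Qed.

Section Bound.
Variable rho : nat -> Aom.
Variable sigma : forall m, nat -> RelT AS m.
Hypothesis Hs : forall m X, UL (@sigma m X).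

Definition Good N x := exists a : AA N, eqom (rho x) (existT AA N a).
Definition GoodR N X m := exists Rk : forall kk : IX N, RelK m (jof kk), repr (@sigma m X) Rk.

Lemma Good_up N M x : N <= M -> Good N x -> Good M x.
Proof.
move=> h [a ha]; have [b hb] := Lex a h; exists b.
exact: eqom_trans ha (Lift_eqom hb).
Qed.

Lemma GoodR_up N M X m : N <= M -> GoodR N X m -> GoodR M X m.
Proof.
move=> h [Rk hR]; have [RkM hS] := @SL_ex (RelK m) _ Rk _ h; exists RkM.
exact: SL_repr hS hR.
Qed.

Lemma term_bound t : exists N, forall x, occT x t -> Good N x.
Proof.
elim: t => [x|f args IH].
- case E: (rho x) => [n a]; exists n => y /= ->; exists a; rewrite E; exact: eqom_refl.
- have [N hN] := @fin_bound _ (fun l N => forall x, occT x (args l) -> Good N x)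
     (fun l N M h H x hx => Good_up h (H x hx)) IH.
  exists N => x /= [l hl]; exact: hN l x hl.
Qed.

Definition QF N p := (forall x, occV x p -> Good N x) /\ (forall X m, occR X m p -> GoodR N X m).

Lemma QF_up N M p : N <= M -> QF N p -> QF M p.
Proof.
move=> h [h1 h2]; split => [x hx|X m hx]; [exact: Good_up h (h1 x hx) | exact: GoodR_up h (h2 X m hx)].
Qed.

Lemma QF_join p q : (exists N, QF N p) -> (exists N, QF N q) ->
  exists N, (forall x, occV x p \/ occV x q -> Good N x) /\
            (forall X m, occR X m p \/ occR X m q -> GoodR N X m).
Proof.
move=> [N1 h1] [N2 h2].
have [a1 a2] := QF_up (leq_addr N2 N1) h1.
have [b1 b2] := QF_up (leq_addl N1 N2) h2.
exists (N1 + N2); split.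
- move=> x [h|h]; [exact: a1 | exact: b1].
- move=> X m [h|h]; [exact: a2 | exact: b2].
Qed.

Lemma formula_bound p : exists N, QF N p.
Proof.
elim: p.
- move=> t1 t2.
  have [N1 h1] := term_bound t1; have [N2 h2] := term_bound t2.
  exists (N1 + N2); split => //= x [h|h].
  + apply: Good_up (h1 x h); exact: leq_addr.
  + apply: Good_up (h2 x h); exact: leq_addl.
- move=> P args.
  have [N hN] := @fin_bound _ (fun l N => forall x, occT x (args l) -> Good N x)
     (fun l N M h H x hx => Good_up h (H x hx)) (fun l => term_bound (args l)).
  exists N; split => //= x [l hl]; exact: hN l x hl.
- move=> X m args.
  have [N hN] := @fin_bound _ (fun l N => forall x, occT x (args l) -> Good N x)
     (fun l N M h H x hx => Good_up h (H x hx)) (fun l => term_bound (args l)).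
  have [n0 [Rk0 hR0]] := UL_repr' (Hs m X).
  exists (N + n0); split => /=.
  + move=> x [l hl]; apply: Good_up (hN l x hl); exact: leq_addr.
  + move=> Y m' [<- <-]; apply: GoodR_up (_ : GoodR n0 X m); first exact: leq_addl.
    by exists Rk0.
- by [].
- move=> p hp q hq; exact: QF_join.
- move=> p hp q hq; exact: QF_join.
- move=> p hp q hq; exact: QF_join.
- by [].
- by [].
- by [].
- by [].
Qed.

Lemma good_env p : exists N (e : forall kk : IX N, Env (jof kk)), HypV rho e p /\ HypR sigma e p.
Proof.
have [N [h1 h2]] := formula_bound p.
pose rhoN x := epsilon (inhabits (sect (fun kk : IX N => dom_pt (B (jof kk)))))
                 (fun a : AA N => eqom (rho x) (existT AA N a)).
pose RkN m X := epsilon (inhabits (fun (kk : IX N) (_ : 'I_m.+1 -> dom (B (jof kk))) => True))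
                 (fun Rk : forall kk : IX N, RelK m (jof kk) => repr (@sigma m X) Rk).
exists N, (fun kk => (fun x => evalA (rhoN x) kk, fun m X => RkN m X kk)); split.
- move=> x hx /=; rewrite sect_evalA; exact: epsilon_spec (h1 x hx).
- move=> X m hx /=; exact: epsilon_spec (h2 X m hx).
Qed.

End Bound.

Definition ULrel m N (Sg : forall kk : IX N, RelK m (jof kk)) : ('I_m.+1 -> Aom) -> Prop :=
  fun x => exists d (y : 'I_m.+1 -> AA (d + N)),
       (forall l, eqom (x l) (existT AA (d + N) (y l))) /\ relUp (RnOf Sg) d y.

Lemma ULrel_ok m N (Sg : forall kk : IX N, RelK m (jof kk)) : UL (ULrel Sg) /\ repr (ULrel Sg) Sg.
Proof.
split.
- exists N, (RnOf Sg); split => //; by exists Sg.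
- by apply: (@UL_repr m N (RnOf Sg) Sg (ULrel Sg)).
Qed.

Lemma main (phi : formula tau) :
  G (fun j => full_models (B j) phi) <-> lambda_models B G F phi.
Proof.
split.
- move=> H rho sigma Hs.
  have [N [e [HV HR]]] := @good_env rho sigma Hs phi.
  apply: (proj2 (los HV HR)).
  have := proj2 (inH_jof N _) H.
  apply: (uf_up (inH_uf N)) => kk hk; apply: hk => //.
- move=> H; apply: NNPP => nG.
  have G' : G (fun j => ~ full_models (B j) phi) by exact: (proj2 (uf_not HG _) nG).
  pose e0 : forall kk : IX 0, Env (jof kk) := fun j =>
    epsilon (inhabits ((fun _ => dom_pt (B j)), (fun m _ _ => True)) : inhabited (Env j))
            (fun ev => ~ satk ev phi).
  pose rho := fun x => existT AA 0 (sect (fun kk => (e0 kk).1 x)).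
  pose sigma := fun m X => ULrel (fun kk => (e0 kk).2 m X).
  have Hs : forall m X, UL (sigma m X) by move=> m X; exact: (ULrel_ok _).1.
  have HV : HypV rho e0 phi by move=> x _; exact: eqom_refl.
  have HR : HypR sigma e0 phi by move=> X m _; exact: (ULrel_ok _).2.
  have := proj1 (los HV HR) (H rho sigma Hs) => /= H1.
  apply: (uf_empty HG); apply: (uf_up HG) (uf_cap HG H1 G') => j [h1 h2].
  apply: (epsilon_spec _ (fun ev : Env j => ~ satk ev phi) _ h1).
  move: h2; rewrite /full_models /valid => h2.
  have [r h3] := not_all_ex_not _ _ h2.
  have [s h4] := not_all_ex_not _ _ h3.
  exists (r, s) => h5; apply: h4 => _; exact: h5.
Qed.

End Chain.

Unset Implicit Arguments.

Theorem lemma2p17 (tau : signature) (phi : formula tau)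
  (J : Type) (B : J -> structure tau) (G : (J -> Prop) -> Prop)
  (I : nat -> Type) (F : forall n : nat, (I n -> Prop) -> Prop) :
  ultrafilter G ->
  (forall n : nat, ultrafilter (F n)) ->
  (G (fun j : J => full_models (B j) phi) <-> lambda_models B G F phi).
Proof.
move=> HG HF; exact: (@main tau J B G I F HG HF phi).
Qed.
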